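(* Let $0<q<1$, $0\le p<1$, $z\in\mathbb C$ and $t\in\mathbb C$ with $|t|<1$. Then \[ \sum_{n=0}^\infty\frac{(p;q)_n}{(q;q)_n} \biggl(\sum_{k=0}^n\begin{bmatrix}n\\k\end{bmatrix}_q \frac{q^{k^2+k/2}}{(p;q)_k}z^k\biggr) t^n= \frac{(pt;q)_\infty}{(t;q)_\infty} \sum_{n=0}^\infty\frac{q^{n^2+n/2}}{(pt;q)_n(q;q)_n}(zt)^n . \]
   Context: For $a\in\mathbb C$ and $n\in\{0,1,2,\dots\}\cup\{\infty\}$, $(a;q)_n=\prod_{k=1}^n(1-aq^{k-1})$ (empty product $=1$). The Gaussian $q$-binomial coefficient is $\begin{bmatrix}n\\k\end{bmatrix}_q=\frac{(q;q)_n}{(q;q)_k(q;q)_{n-k}}$. *)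

(* Defs.v *)
From Stdlib Require Import Reals.
From Coquelicot Require Import Coquelicot.
From Coquelicot Require Export Complex.
Open Scope C_scope.

Fixpoint qpoch (a : C) (q : R) (n : nat) : C :=
  match n with
  | O => 1
  | S m => qpoch a q m * (1 - a * RtoC (q ^ m))
  end.

Definition qbinom (q : R) (n k : nat) : C :=
  qpoch (RtoC q) q n / (qpoch (RtoC q) q k * qpoch (RtoC q) q (n - k)).

Definition qpoch_inf_is (a : C) (q : R) (L : C) : Prop :=
  filterlim (fun n => qpoch a q n) eventually (locally L).

(* q^(k^2 + k/2) for 0 < q, as a real number *)
Definition qexp (q : R) (k : nat) : R := q ^ (k * k) * (sqrt q) ^ k.

(* Main.v *)
Require Import Defs.
From Stdlib Require Import Reals.
From Coquelicot Require Import Coquelicot Complex.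
Open Scope C_scope.
From Stdlib Require Import Lra Lia.


Lemma exC_le (a: nat -> C) (b : nat -> R) : (forall n, Cmod (a n) <= b n)%R -> ex_series b -> ex_series a.
Proof. intros. apply (@ex_series_le C_AbsRing C_CompleteNormedModule a b). intros; simpl. apply H. auto. Qed.

Lemma limC_iff (u : nat -> C) a : filterlim u eventually (locally a) <-> is_lim_seq (fun n => Cmod (u n - a)) 0%R.
Proof. rewrite (@filterlim_locally_ball_norm C_AbsRing nat C_NormedModule eventually _ u a).
  rewrite <- is_lim_seq_spec. unfold is_lim_seq', ball_norm. split; intros H eps; specialize (H eps);
  eapply filter_imp; try apply H; intros n Hn; simpl in *; rewrite Rminus_0_r, Rabs_pos_eq in *; try apply Cmod_ge_0; exact Hn. Qed.

Lemma limC_plus (u v : nat -> C) a b : filterlim u eventually (locally a) -> filterlim v eventually (locally b) ->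
  filterlim (fun n => u n + v n) eventually (locally (a + b)).
Proof. rewrite !limC_iff. intros Hu Hv.
  apply (is_lim_seq_le_le (fun _ => 0%R) _ (fun n => Cmod (u n - a) + Cmod (v n - b))%R).
  - intros n; split. apply Cmod_ge_0. replace (u n + v n - (a + b)) with ((u n - a) + (v n - b)) by ring. apply Cmod_triangle.
  - apply is_lim_seq_const.
  - replace 0%R with (0 + 0)%R by ring. apply (is_lim_seq_plus' _ _ 0 0); auto. Qed.

Lemma limC_mult (u v : nat -> C) a b : filterlim u eventually (locally a) -> filterlim v eventually (locally b) ->
  filterlim (fun n => u n * v n) eventually (locally (a * b)).
Proof. rewrite !limC_iff. intros Hu Hv.
  apply (is_lim_seq_le_le (fun _ => 0%R) _ (fun n => (Cmod (u n - a) + Cmod a) * Cmod (v n - b) + Cmod b * Cmod (u n - a))%R).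
  - intros n; split. apply Cmod_ge_0. replace (u n * v n - (a * b)) with (u n * (v n - b) + b * (u n - a)) by ring.
    eapply Rle_trans. apply Cmod_triangle. rewrite !Cmod_mult. apply Rplus_le_compat_r. apply Rmult_le_compat_r. apply Cmod_ge_0.
    replace (u n) with ((u n - a) + a) at 1 by ring. apply Cmod_triangle.
  - apply is_lim_seq_const.
  - replace 0%R with ((0 + Cmod a) * 0 + Cmod b * 0)%R by ring. apply (is_lim_seq_plus' _ _ _ _).
    apply is_lim_seq_mult'; auto. apply (is_lim_seq_plus' _ _ 0 (Cmod a)); auto. apply is_lim_seq_const.
    apply is_lim_seq_mult'; auto. apply is_lim_seq_const. Qed.

Lemma limC_const (c : C) : filterlim (fun _ : nat => c) eventually (locally c).
Proof. apply filterlim_const. Qed.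

Lemma limC_ext (u v : nat -> C) a : (forall n, u n = v n) -> filterlim u eventually (locally a) -> filterlim v eventually (locally a).
Proof. intros. apply (filterlim_ext u v); auto. Qed.

Lemma limC_unique (u : nat -> C) a b : filterlim u eventually (locally a) -> filterlim u eventually (locally b) -> a = b.
Proof. intros. eapply (@filterlim_locally_unique nat C_AbsRing C_NormedModule); eauto. apply Proper_StrongProper, eventually_filter. Qed.

Lemma limC_norm (u : nat -> C) a : filterlim u eventually (locally a) -> is_lim_seq (fun n => Cmod (u n)) (Cmod a).
Proof. intros H. unfold is_lim_seq. simpl. eapply filterlim_comp. apply H.
  apply (@filterlim_norm C_AbsRing C_NormedModule). Qed.

Lemma limC_shift (u : nat -> C) k a : filterlim (fun n => u (n + k)%nat) eventually (locally a) -> filterlim u eventually (locally a).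
Proof. intros H P HP. destruct (H P HP) as [N HN]. exists (N + k)%nat. intros n Hn.
  replace n with (n - k + k)%nat by lia. apply HN. lia. Qed.

Lemma limC_shift' (u : nat -> C) k a : filterlim u eventually (locally a) -> filterlim (fun n => u (n + k)%nat) eventually (locally a).
Proof. intros H P HP. destruct (H P HP) as [N HN]. exists N. intros n Hn. apply HN. lia. Qed.

Lemma limC_sub (u : nat -> C) k a : filterlim u eventually (locally a) -> filterlim (fun n => u (n - k)%nat) eventually (locally a).
Proof. intros H P HP. destruct (H P HP) as [N HN]. exists (N + k)%nat. intros n Hn. apply HN. lia. Qed.

Lemma limC_le (u : nat -> C) a b : filterlim u eventually (locally a) -> (forall n, Cmod (u n) <= b)%R -> (Cmod a <= b)%R.
Proof. intros H Hb. apply limC_norm in H.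
  assert (H2 := is_lim_seq_le _ (fun _ => b) _ b Hb H (is_lim_seq_const b)). simpl in H2. auto. Qed.

Lemma limC_ge (u : nat -> C) a b : filterlim u eventually (locally a) -> (forall n, b <= Cmod (u n))%R -> (b <= Cmod a)%R.
Proof. intros H Hb. apply limC_norm in H.
  assert (H2 := is_lim_seq_le (fun _ => b) _ b _ Hb (is_lim_seq_const b) H). simpl in H2. auto. Qed.

Lemma limC_zero (u : nat -> C) (a : C) c q : (0 <= q < 1)%R -> filterlim u eventually (locally a) ->
  (forall n, Cmod (u n) <= c * q ^ n)%R -> a = 0.
Proof. intros Hq H Hb. apply limC_norm in H.
  assert (Hg : is_lim_seq (fun n => c * q ^ n)%R (c * 0)%R).
  { apply is_lim_seq_mult'. apply is_lim_seq_const. apply is_lim_seq_geom. rewrite Rabs_pos_eq; lra. }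
  assert (H2 := is_lim_seq_le _ _ _ _ Hb H Hg). simpl in H2.
  apply Cmod_eq_0. assert (H3 := Cmod_ge_0 a). lra. Qed.

Lemma seriesC_unique (u : nat -> C) a b : is_series u a -> is_series u b -> a = b.
Proof. unfold is_series. intros. eapply limC_unique; eauto. Qed.

Lemma norm_sum_n (u : nat -> C) n : (Cmod (sum_n u n) <= sum_n (fun k => Cmod (u k)) n)%R.
Proof. unfold sum_n. assert (H := @norm_sum_n_m C_AbsRing C_NormedModule u 0 n). simpl in H. exact H. Qed.

Lemma sum_n_le (u v : nat -> R) n : (forall k, u k <= v k)%R -> (sum_n u n <= sum_n v n)%R.
Proof. intros H. induction n. rewrite !sum_O; auto. rewrite !sum_Sn. unfold plus; simpl. specialize (H (S n)). lra. Qed.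

Lemma series_norm_le (h : nat -> C) (b : nat -> R) l lb : is_series h l -> (forall m, Cmod (h m) <= b m)%R -> is_series b lb -> (Cmod l <= lb)%R.
Proof. intros Hh Hb Hlb. unfold is_series in Hh. apply limC_norm in Hh.
  assert (H2 := is_lim_seq_le _ (sum_n b) _ lb (fun n => Rle_trans _ _ _ (norm_sum_n h n) (sum_n_le _ _ n Hb)) Hh Hlb).
  simpl in H2; auto. Qed.

Lemma sumC_S (u : nat -> C) n : sum_n u (S n) = sum_n u n + u (S n).
Proof. rewrite sum_Sn. reflexivity. Qed.
Lemma sumC_O (u : nat -> C) : sum_n u 0 = u 0%nat.
Proof. apply sum_O. Qed.
Lemma sumC_minus (u v : nat -> C) n : sum_n u n - sum_n v n = sum_n (fun k => u k - v k) n.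
Proof. induction n. rewrite !sumC_O; ring. rewrite !sumC_S, <- IHn; ring. Qed.
Lemma sumC_ext (u v : nat -> C) n : (forall k, (k <= n)%nat -> u k = v k) -> sum_n u n = sum_n v n.
Proof. intros H. apply sum_n_ext_loc. auto. Qed.
Lemma sumC_mult_l (c : C) (u : nat -> C) n : c * sum_n u n = sum_n (fun k => c * u k) n.
Proof. induction n. rewrite !sumC_O; ring. rewrite !sumC_S, <- IHn; ring. Qed.

Lemma pow_le1 (x : R) n : (0 <= x <= 1)%R -> (x ^ n <= 1)%R.
Proof. intros H. rewrite <- (pow1 n). apply pow_incr. auto. Qed.

Lemma isC_plus (u v : nat -> C) (a b : C) : is_series u a -> is_series v b -> is_series (fun n => u n + v n) (a + b).
Proof. intros. exact (is_series_plus u v a b H H0). Qed.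
Lemma isC_minus (u v : nat -> C) (a b : C) : is_series u a -> is_series v b -> is_series (fun n => u n - v n) (a - b).
Proof. intros. exact (is_series_minus u v a b H H0). Qed.
Lemma isC_scal (c : C) (u : nat -> C) (a : C) : is_series u a -> is_series (fun n => c * u n) (c * a).
Proof. intros. exact (@is_series_scal_l C_AbsRing C_NormedModule c u a H). Qed.
Lemma isC_ext (u v : nat -> C) (a : C) : (forall n, u n = v n) -> is_series u a -> is_series v a.
Proof. intros. eapply is_series_ext; eauto. Qed.
Lemma isC_eq (u : nat -> C) (a b : C) : a = b -> is_series u a -> is_series u b.
Proof. intros; subst; auto. Qed.
Lemma isC_S (u : nat -> C) (a : C) : is_series u a -> is_series (fun n => u (S n)) (a - u 0%nat).
Proof. intros H. apply is_series_incr_1. assert (E : a - u 0%nat + u 0%nat = a) by ring.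
  change (plus (a - u 0%nat) (u 0%nat)) with (a - u 0%nat + u 0%nat). rewrite E. auto. Qed.
Lemma isR_geom (c r : R) : (0 <= r < 1)%R -> is_series (fun n => c * r ^ n)%R (c / (1 - r))%R.
Proof. intros Hr. eapply is_series_ext. 2: apply (@is_series_scal_l R_AbsRing R_NormedModule c _ _ (is_series_geom r ltac:(rewrite Rabs_pos_eq; lra))).
  intros; reflexivity. Qed.

Lemma sumC_plus (u v : nat -> C) n : @eq C (sum_n (fun k => u k + v k) n) (sum_n u n + sum_n v n).
Proof. induction n. rewrite !sumC_O; ring. rewrite !sumC_S, IHn; ring. Qed.

Lemma tri (w : nat -> nat -> C) N : @eq C (sum_n (fun n => sum_n (fun k => w k (n - k)%nat) n) N) (sum_n (fun k => sum_n (w k) (N - k)) N).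
Proof. induction N.
  - rewrite !sumC_O. reflexivity.
  - rewrite sumC_S, IHN. rewrite (sumC_S (fun k => sum_n (w k) (S N - k))).
    rewrite (sumC_ext (fun k => sum_n (w k) (S N - k)) (fun k => sum_n (w k) (N - k) + w k (S N - k)%nat)).
    2:{ intros k Hk. replace (S N - k)%nat with (S (N - k)) by lia. rewrite sumC_S. reflexivity. }
    rewrite sumC_plus, sumC_S. replace (S N - S N)%nat with 0%nat by lia. rewrite sumC_O. ring. Qed.

Lemma fin_lim (h : nat -> nat -> R) K : (forall k, is_lim_seq (fun N => h N k) 0%R) -> is_lim_seq (fun N => sum_n (h N) K) 0%R.
Proof. intros H. induction K.
  - apply (is_lim_seq_ext (fun N => h N 0%nat)); auto. intros; rewrite sum_O; auto.
  - apply (is_lim_seq_ext (fun N => sum_n (h N) K + h N (S K))%R). intros; rewrite sum_Sn; auto.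
    replace 0%R with (0+0)%R by ring. apply is_lim_seq_plus'; auto. Qed.

Lemma psum_le (M : nat -> R) SM N : (forall k, 0 <= M k)%R -> is_series M SM -> (sum_n M N <= SM)%R.
Proof. intros H0 H. assert (Hl : is_lim_seq (sum_n M) SM) by exact H.
  apply (is_lim_seq_incr_n _ N) in Hl.
  assert (Hle : forall n, (sum_n M N <= sum_n M (n + N))%R).
  { induction n. replace (0 + N)%nat with N by lia; lra.
    replace (S n + N)%nat with (S (n + N)) by lia. rewrite sum_Sn. unfold plus; simpl. specialize (H0 (S (n+N))). lra. }
  assert (H2 := is_lim_seq_le (fun _ => sum_n M N) _ _ _ Hle (is_lim_seq_const _) Hl). simpl in H2. apply H2. Qed.

Lemma tannery (f : nat -> nat -> C) (g : nat -> C) (M : nat -> R) (G : C) :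
  (forall N k, Cmod (f N k) <= M k)%R -> (forall k, Cmod (g k) <= M k)%R -> ex_series M ->
  (forall k, filterlim (fun N => f N k) eventually (locally (g k))) -> is_series g G ->
  filterlim (fun N => sum_n (f N) N) eventually (locally G).
Proof. intros Hf Hg [SM HM] Hlim HG.
  assert (HM0 : forall k, (0 <= M k)%R). { intros k. eapply Rle_trans. apply Cmod_ge_0. apply (Hg k). }
  apply (limC_ext (fun N => (sum_n (f N) N - sum_n g N) + sum_n g N)). intros; ring.
  replace G with (0 + G) by ring. apply limC_plus; [| exact HG].
  apply limC_iff. apply is_lim_seq_spec. intros eps.
  assert (HMl : is_lim_seq (sum_n M) SM) by exact HM. apply is_lim_seq_spec in HMl.
  assert (e4 : (0 < eps / 4)%R) by (destruct eps; simpl; lra).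
  destruct (HMl (mkposreal _ e4)) as [K HK]. specialize (HK K (le_n K)). simpl in HK.
  assert (Hfin := fin_lim (fun N k => Cmod (f N k - g k)) K (fun k => proj1 (limC_iff _ _) (Hlim k))).
  apply is_lim_seq_spec in Hfin. destruct (Hfin (mkposreal _ e4)) as [N0 HN0].
  exists (max N0 K). intros N HN. specialize (HN0 N ltac:(lia)). simpl in HN0.
  rewrite Rminus_0_r, Rabs_pos_eq in HN0 by (apply sum_n_le with (u := fun _ => 0%R) (n := K) in HM0;
     rewrite sum_n_const in HM0; eapply Rle_trans; [|apply sum_n_le]; [|intros; apply Cmod_ge_0]; rewrite sum_n_const; lra).
  rewrite Rminus_0_r, Rabs_pos_eq by apply Cmod_ge_0. replace (sum_n (f N) N - sum_n g N - 0) with (sum_n (f N) N - sum_n g N) by ring.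
  assert (E : sum_n (f N) N - sum_n g N = sum_n (fun k => f N k - g k) N).
  { apply sumC_minus. }
  rewrite E. eapply Rle_lt_trans. apply norm_sum_n.
  unfold sum_n. rewrite (sum_n_m_Chasles _ 0 K N) by lia. unfold plus; simpl.
  assert (B : (sum_n_m (fun k => Cmod (f N k - g k)) (S K) N <= sum_n_m (fun k => 2 * M k)%R (S K) N)%R).
  { apply sum_n_m_le. intros k. unfold Cminus. eapply Rle_trans. apply Cmod_triangle. rewrite Cmod_opp.
    specialize (Hf N k); specialize (Hg k); lra. }
  assert (B2 : sum_n_m (fun k => 2 * M k)%R (S K) N = (2 * (sum_n M N - sum_n M K))%R).
  { rewrite (@sum_n_m_sum_n R_AbelianGroup) by lia. unfold minus, plus, opp; simpl.
    replace (fun k => 2 * M k)%R with (fun k => scal 2 (M k))%R by reflexivity.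
    rewrite !(@sum_n_scal_l R_Ring R_ModuleSpace). unfold scal; simpl; unfold mult; simpl. unfold plus, opp; simpl. change (@sum_n (ModuleSpace.AbelianMonoid R_Ring R_ModuleSpace)) with (@sum_n R_AbelianMonoid). lra. }
  assert (B3 := psum_le M SM N HM0 HM).
  unfold sum_n in HN0. rewrite Rabs_minus_sym, Rabs_pos_eq in HK by (assert (B4 := psum_le M SM K HM0 HM); lra).
  lra.
Qed.

Lemma exp_low (x y : R) : (0 <= x <= y)%R -> (y < 1)%R -> (exp (-(x/(1-y))) <= 1 - x)%R.
Proof. intros Hx Hy. assert (H1 := exp_ineq1_le (x/(1-y))).
  assert (H2 : (1/(1-x) <= 1 + x/(1-y))%R).
  { apply (Rmult_le_reg_r ((1-x)*(1-y))). apply Rmult_lt_0_compat; lra.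
    field_simplify; try lra. nra. }
  rewrite exp_Ropp. apply (Rmult_le_reg_r (exp (x/(1-y)))). apply exp_pos.
  rewrite Rinv_l by (apply Rgt_not_eq, exp_pos).
  assert (Hp : (0 < 1 - x)%R) by lra.
  apply (Rmult_le_compat_l (1-x)) in H2; [|lra]. 
  replace ((1-x)*(1/(1-x)))%R with 1%R in H2 by (field; lra). nra. Qed.

Lemma exp_mono (x y : R) : (x <= y)%R -> (exp x <= exp y)%R.
Proof. intros [H|H]. left; apply exp_increasing; auto. subst; lra. Qed.

Lemma Cmod_1m_up (w : C) : (Cmod (1 - w) <= 1 + Cmod w)%R.
Proof. unfold Cminus. eapply Rle_trans. apply Cmod_triangle. rewrite Cmod_opp, Cmod_1. lra. Qed.
Lemma Cmod_1m_low (w : C) : (1 - Cmod w <= Cmod (1 - w))%R.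
Proof. assert (H := Cmod_triangle (1 - w) w). assert (E : 1 - w + w = 1) by ring. rewrite E, Cmod_1 in H. lra. Qed.
Lemma Cmod_aq (a : C) q n : (0 <= q)%R -> Cmod (a * RtoC (q ^ n)) = (Cmod a * q ^ n)%R.
Proof. intros. rewrite Cmod_mult, Cmod_R, Rabs_pos_eq; auto. apply pow_le; auto. Qed.

Lemma qpoch_up (a : C) (q : R) n : (0 <= q < 1)%R -> (Cmod (qpoch a q n) <= exp (Cmod a * (1 - q ^ n) / (1 - q)))%R.
Proof. intros Hq. induction n.
  - simpl. rewrite Cmod_1. replace (Cmod a * (1 - 1) / (1 - q))%R with 0%R by (field; lra). rewrite exp_0; lra.
  - simpl qpoch. rewrite Cmod_mult. eapply Rle_trans. apply Rmult_le_compat. apply Cmod_ge_0. apply Cmod_ge_0. apply IHn. apply Cmod_1m_up.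
    rewrite Cmod_aq by lra. eapply Rle_trans. apply Rmult_le_compat_l. apply Rlt_le, exp_pos. apply exp_ineq1_le.
    rewrite <- exp_plus. right. f_equal. simpl. field. lra. Qed.

Lemma qpoch_up' (a : C) (q : R) n : (0 <= q < 1)%R -> (Cmod (qpoch a q n) <= exp (Cmod a / (1 - q)))%R.
Proof. intros Hq. eapply Rle_trans. apply qpoch_up; auto. apply exp_mono.
  assert (0 <= q ^ n)%R by (apply pow_le; lra). assert (Ha := Cmod_ge_0 a).
  unfold Rdiv. apply Rmult_le_compat_r. apply Rlt_le, Rinv_0_lt_compat; lra. nra. Qed.

Lemma qpoch_low (a : C) (q : R) n : (0 <= q < 1)%R -> (Cmod a < 1)%R ->
  (exp (-(Cmod a * (1 - q ^ n) / ((1 - Cmod a) * (1 - q)))) <= Cmod (qpoch a q n))%R.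
Proof. intros Hq Ha. assert (Ha0 := Cmod_ge_0 a). induction n.
  - simpl. rewrite Cmod_1. replace (Cmod a * (1 - 1) / ((1 - Cmod a) * (1 - q)))%R with 0%R by (field; lra). rewrite Ropp_0, exp_0; lra.
  - simpl qpoch. rewrite Cmod_mult. assert (Hqn : (0 <= q ^ n <= 1)%R) by (split; [apply pow_le; lra | apply pow_le1; lra]).
    assert (H1 : (exp (-(Cmod a * q ^ n / (1 - Cmod a))) <= Cmod (1 - a * RtoC (q ^ n)))%R).
    { eapply Rle_trans. apply exp_low. split. nra. nra. auto. rewrite <- Cmod_aq by lra. apply Cmod_1m_low. }
    eapply Rle_trans; [|apply Rmult_le_compat; [apply Rlt_le, exp_pos|apply Rlt_le, exp_pos|apply IHn|apply H1]].
    rewrite <- exp_plus. right. f_equal. simpl. field. lra. Qed.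

Lemma qpoch_low' (a : C) (q : R) n : (0 <= q < 1)%R -> (Cmod a < 1)%R ->
  (exp (-(Cmod a / ((1 - Cmod a) * (1 - q)))) <= Cmod (qpoch a q n))%R.
Proof. intros Hq Ha. eapply Rle_trans; [|apply qpoch_low; auto]. apply exp_mono. apply Ropp_le_contravar.
  assert (0 <= q ^ n)%R by (apply pow_le; lra). assert (Ha0 := Cmod_ge_0 a).
  unfold Rdiv. apply Rmult_le_compat_r. apply Rlt_le, Rinv_0_lt_compat. apply Rmult_lt_0_compat; lra. nra. Qed.

Lemma qpoch_nz (a : C) (q : R) n : (0 <= q < 1)%R -> (Cmod a < 1)%R -> qpoch a q n <> 0.
Proof. intros Hq Ha E. assert (H := qpoch_low' a q n Hq Ha). rewrite E, Cmod_0 in H.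
  assert (H2 := exp_pos (-(Cmod a / ((1 - Cmod a) * (1 - q))))). lra. Qed.

Lemma qpoch_add (a : C) (q : R) k m : qpoch a q (k + m) = qpoch a q k * qpoch (a * RtoC (q ^ k)) q m.
Proof. induction m. rewrite Nat.add_0_r. simpl. ring.
  replace (k + S m)%nat with (S (k + m)) by lia. simpl qpoch. rewrite IHm, pow_add, RtoC_mult. ring. Qed.

Lemma qpoch_cv (a : C) (q : R) : (0 <= q < 1)%R -> exists L, qpoch_inf_is a q L.
Proof. intros Hq. set (d := fun i => qpoch a q (S i) - qpoch a q i).
  assert (Hd : ex_series d).
  { apply (exC_le _ (fun i => exp (Cmod a / (1 - q)) * Cmod a * q ^ i)%R).
    - intros i. unfold d. simpl qpoch. replace (qpoch a q i * (1 - a * RtoC (q ^ i)) - qpoch a q i) with (- (qpoch a q i * (a * RtoC (q ^ i)))) by ring.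
      rewrite Cmod_opp, Cmod_mult, Cmod_aq by lra. rewrite <- Rmult_assoc. apply Rmult_le_compat_r. apply pow_le; lra.
      apply Rmult_le_compat_r. apply Cmod_ge_0. apply qpoch_up'; auto.
    - eexists. eapply is_series_ext. 2: apply (@is_series_scal_l R_AbsRing R_NormedModule (exp (Cmod a / (1 - q)) * Cmod a)%R _ _ (is_series_geom q ltac:(rewrite Rabs_pos_eq; lra))).
      intros; reflexivity. }
  destruct Hd as [l Hl]. exists (l + 1). unfold qpoch_inf_is. apply (limC_shift _ 1).
  apply (limC_ext (fun n => sum_n d n + 1)).
  - intros n. replace (n + 1)%nat with (S n) by lia. induction n. rewrite sumC_O. unfold d. simpl. ring.
    rewrite sumC_S. replace (sum_n d n + d (S n) + 1) with ((sum_n d n + 1) + d (S n)) by ring. rewrite IHn. unfold d. ring.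
  - apply limC_plus. exact Hl. apply limC_const. Qed.

Definition Aq (a : C) (q : R) m := qpoch a q m / qpoch (RtoC q) q m.
Definition Bq (a : C) (q : R) := (exp (Cmod a / (1 - q)) / exp (-(q / ((1 - q) * (1 - q)))))%R.

Lemma Cmod_q (q : R) : (0 <= q)%R -> Cmod (RtoC q) = q.
Proof. intros. rewrite Cmod_R, Rabs_pos_eq; auto. Qed.

Lemma Q_nz (q : R) m : (0 < q < 1)%R -> qpoch (RtoC q) q m <> 0.
Proof. intros. apply qpoch_nz. lra. rewrite Cmod_q; lra. Qed.

Lemma Bq_pos a q : (0 < Bq a q)%R.
Proof. unfold Bq. apply Rdiv_lt_0_compat; apply exp_pos. Qed.

Lemma Aq_bound (a : C) (q : R) m : (0 < q < 1)%R -> (Cmod (Aq a q m) <= Bq a q)%R.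
Proof. intros Hq. unfold Aq, Bq. rewrite Cmod_div by (apply Q_nz; auto).
  assert (H1 := qpoch_up' a q m ltac:(lra)). assert (H2 := qpoch_low' (RtoC q) q m ltac:(lra) ltac:(rewrite Cmod_q; lra)).
  rewrite Cmod_q in H2 by lra. assert (H3 := exp_pos (- (q / ((1 - q) * (1 - q))))).
  unfold Rdiv. apply Rmult_le_compat. apply Cmod_ge_0. apply Rlt_le, Rinv_0_lt_compat; lra. auto.
  apply Rinv_le_contravar; auto. Qed.

Lemma one_m_qpow_nz (q : R) m : (0 < q < 1)%R -> 1 - RtoC q * RtoC q ^ m <> 0.
Proof. intros Hq E. rewrite <- RtoC_pow, <- RtoC_mult in E.
  assert (H := pow_lt_1_compat q (S m) ltac:(lra) ltac:(lia)). simpl in H.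
  assert (E2 : RtoC (1 - q * q ^ m) = 0) by (rewrite <- E; unfold Cminus; rewrite <- RtoC_opp, <- RtoC_plus; reflexivity).
  apply RtoC_inj in E2. lra. Qed.

Lemma Aq_S (a : C) (q : R) m : (0 < q < 1)%R -> Aq a q (S m) * (1 - RtoC q * RtoC q ^ m) = Aq a q m * (1 - a * RtoC q ^ m).
Proof. intros Hq. unfold Aq. simpl qpoch. rewrite !RtoC_pow.
  assert (H1 := Q_nz q m Hq). assert (H2 := one_m_qpow_nz q m Hq). field. split; auto. Qed.

Lemma series_ex (a y : C) (q : R) : (0 < q < 1)%R -> (Cmod y < 1)%R -> exists F : C, is_series (fun m => Aq a q m * y ^ m) F.
Proof. intros Hq Hy. assert (Ex : ex_series (fun m => Aq a q m * y ^ m)).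
  { apply (exC_le _ (fun m => Bq a q * Cmod y ^ m)%R).
    intros m. rewrite Cmod_mult, Cmod_pow. apply Rmult_le_compat_r. apply pow_le, Cmod_ge_0. apply Aq_bound; auto.
    eexists. apply isR_geom. split; auto. apply Cmod_ge_0. }
  exact Ex. Qed.

Lemma fe (a y : C) (q : R) F1 F2 : (0 < q < 1)%R -> is_series (fun m => Aq a q m * y ^ m) F1 ->
  is_series (fun m => Aq a q m * (RtoC q * y) ^ m) F2 -> (1 - y) * F1 = (1 - a * y) * F2.
Proof. intros Hq H1 H2. set (h := fun m => Aq a q m * y ^ m - Aq a q m * (RtoC q * y) ^ m).
  assert (Hh : is_series h (F1 - F2)) by (apply isC_minus; auto).
  apply isC_S in Hh. assert (h0 : h 0%nat = 0) by (unfold h; simpl; ring). rewrite h0 in Hh.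
  assert (Hh2 : is_series (fun m => h (S m)) (y * (F1 - a * F2))).
  { apply (isC_ext (fun m => y * (Aq a q m * y ^ m - a * (Aq a q m * (RtoC q * y) ^ m)))).
    - intros m. unfold h. rewrite !Cpow_mult_l. rewrite !Cpow_S.
      replace (Aq a q (S m) * (y * y ^ m) - Aq a q (S m) * (RtoC q * RtoC q ^ m * (y * y ^ m)))
        with (Aq a q (S m) * (1 - RtoC q * RtoC q ^ m) * (y * y ^ m)) by ring.
      rewrite Aq_S by auto. ring.
    - apply isC_scal. apply isC_minus; auto. apply isC_scal; auto. }
  assert (E := seriesC_unique _ _ _ Hh Hh2).
  replace (F1 - F2 - 0) with (F1 - F2) in E by ring.
  assert (E2 : F1 - F2 - y * (F1 - a * F2) = 0) by (rewrite E; ring).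
  replace ((1 - y) * F1) with ((1 - a * y) * F2 + (F1 - F2 - y * (F1 - a * F2))) by ring. rewrite E2. ring. Qed.

Lemma qbin_thm (a x La Lx : C) (q : R) : (0 < q < 1)%R -> (Cmod x < 1)%R ->
  qpoch_inf_is (a * x) q La -> qpoch_inf_is x q Lx -> Lx <> 0 ->
  is_series (fun m => Aq a q m * x ^ m) (La / Lx).
Proof. intros Hq Hx HLa HLx Hnz.
  destruct (series_ex a x q Hq Hx) as [F0 H0].
  assert (Hy : forall n, (Cmod (RtoC (q ^ n) * x) <= q ^ n * Cmod x)%R).
  { intros n. rewrite Cmod_mult, Cmod_R, Rabs_pos_eq. lra. apply pow_le; lra. }
  assert (Hqn : forall n, (0 <= q ^ n <= 1)%R) by (intros; split; [apply pow_le; lra|apply pow_le1; lra]).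
  assert (Hy1 : forall n, (Cmod (RtoC (q ^ n) * x) < 1)%R).
  { intros n. eapply Rle_lt_trans. apply Hy. specialize (Hqn n). assert (Hx0 := Cmod_ge_0 x). nra. }
  assert (Cl : forall n, exists Fn : C, is_series (fun m => Aq a q m * (RtoC (q ^ n) * x) ^ m) Fn /\
     F0 * qpoch x q n = qpoch (a * x) q n * Fn).
  { induction n.
    - exists F0. split. eapply isC_ext; [|exact H0]. intros m. simpl. f_equal. f_equal. ring. simpl. ring.
    - destruct IHn as [Fn [HFn En]]. destruct (series_ex a (RtoC (q ^ S n) * x) q Hq (Hy1 (S n))) as [F' HF'].
      exists F'. split; auto.
      assert (Efe := fe a (RtoC (q ^ n) * x) q Fn F' Hq HFn ltac:(eapply isC_ext; [|exact HF']; intros m; simpl; rewrite RtoC_mult; f_equal; f_equal; ring)).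
      simpl qpoch. replace (F0 * (qpoch x q n * (1 - x * RtoC (q ^ n)))) with ((F0 * qpoch x q n) * (1 - x * RtoC (q ^ n))) by ring.
      rewrite En. replace (qpoch (a * x) q n * Fn * (1 - x * RtoC (q ^ n))) with (qpoch (a * x) q n * ((1 - RtoC (q ^ n) * x) * Fn)) by ring.
      rewrite Efe. ring. }
  set (U := exp (Cmod (a * x) / (1 - q))).
  assert (Hb : forall n, (Cmod (F0 * qpoch x q n - qpoch (a * x) q n) <= (U * (Bq a q / (1 - Cmod x))) * q ^ n)%R).
  { intros n. destruct (Cl n) as [Fn [HFn En]]. rewrite En.
    replace (qpoch (a * x) q n * Fn - qpoch (a * x) q n) with (qpoch (a * x) q n * (Fn - 1)) by ring.
    rewrite Cmod_mult. rewrite Rmult_assoc. apply Rmult_le_compat. apply Cmod_ge_0. apply Cmod_ge_0. apply qpoch_up'; lra.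
    set (y := RtoC (q ^ n) * x) in *.
    apply isC_S in HFn. simpl in HFn. unfold Aq at 2 in HFn. simpl in HFn.
    replace (Fn - 1 / 1 * 1) with (Fn - 1) in HFn by (field; apply C1_neq_C0).
    assert (Hr : (0 <= Cmod y < 1)%R) by (split; [apply Cmod_ge_0|apply Hy1]).
    eapply Rle_trans. eapply series_norm_le. exact HFn.
    2: apply (isR_geom (Bq a q * Cmod y) (Cmod y) Hr).
    intros m. simpl. rewrite Cmod_mult, Cmod_mult, Cmod_pow. rewrite <- Rmult_assoc. apply Rmult_le_compat_r. apply pow_le, Cmod_ge_0.
    apply Rmult_le_compat_r. apply Cmod_ge_0. apply Aq_bound; auto.
    assert (HB := Bq_pos a q). specialize (Hqn n). specialize (Hy n). fold y in Hy. assert (Hx0 := Cmod_ge_0 x).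
    assert (E3 : (Bq a q / (1 - Cmod x) * q ^ n = Bq a q * q ^ n / (1 - Cmod x))%R) by (field; lra).
    rewrite E3. unfold Rdiv. apply Rmult_le_compat. apply Rmult_le_pos; lra. apply Rlt_le, Rinv_0_lt_compat; lra.
    apply Rmult_le_compat_l. lra. nra. apply Rinv_le_contravar; nra. }
  assert (Hlim : filterlim (fun n => F0 * qpoch x q n - qpoch (a * x) q n) eventually (locally (F0 * Lx - La))).
  { apply (limC_ext (fun n => F0 * qpoch x q n + (-1) * qpoch (a * x) q n)). intros; ring.
    replace (F0 * Lx - La) with (F0 * Lx + (-1) * La) by ring. apply limC_plus; apply limC_mult; auto; apply limC_const. }
  assert (Z := limC_zero _ _ _ q ltac:(lra) Hlim Hb).
  apply (isC_eq _ F0); auto. field_simplify_eq; auto. 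
  replace La with (F0 * Lx) at 1. ring. transitivity (F0 * Lx - (F0 * Lx - La)). rewrite Z; ring. ring. Qed.

Lemma geomdom (w q : R) : (0 < q < 1)%R -> (0 <= w)%R -> exists D, (0 <= D)%R /\ forall k, ((w * q ^ k) ^ k <= D * (1/2) ^ k)%R.
Proof. intros Hq Hw.
  assert (Hl : is_lim_seq (fun n => q ^ n)%R 0%R) by (apply is_lim_seq_geom; rewrite Rabs_pos_eq; lra).
  apply is_lim_seq_spec in Hl. assert (He : (0 < / (2 * w + 1))%R) by (apply Rinv_0_lt_compat; lra).
  destruct (Hl (mkposreal _ He)) as [K HK]. simpl in HK.
  set (mx := Rmax 1 (2 * w)). exists (mx ^ K)%R. split. apply pow_le. unfold mx. eapply Rle_trans; [|apply Rmax_l]; lra.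
  intros k. replace ((w * q ^ k) ^ k)%R with ((2 * w * q ^ k) ^ k * (1/2) ^ k)%R by (rewrite <- Rpow_mult_distr; f_equal; field).
  apply Rmult_le_compat_r. apply pow_le; lra.
  assert (Hqk : (0 <= q ^ k <= 1)%R) by (split; [apply pow_le; lra|apply pow_le1; lra]).
  assert (Hm1 : (1 <= mx)%R) by apply Rmax_l.
  destruct (Compare_dec.le_lt_dec K k) as [Hk|Hk].
  - specialize (HK k Hk). rewrite Rminus_0_r, Rabs_pos_eq in HK by lra.
    assert (H1 : (2 * w * q ^ k <= 1)%R).
    { apply (Rmult_lt_compat_l (2 * w + 1)) in HK; [|lra]. rewrite Rinv_r in HK by lra. nra. }
    eapply Rle_trans. apply pow_incr. split. nra. exact H1. rewrite pow1. apply pow_R1_Rle; auto.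
  - eapply Rle_trans. apply pow_incr. split. nra. assert (H2 : (2 * w <= mx)%R) by apply Rmax_r. 
    instantiate (1 := mx). nra. apply Rle_pow; auto. lia. Qed.

Lemma qexp_bound (q : R) k : (0 < q < 1)%R -> (0 <= qexp q k <= (q ^ k) ^ k)%R.
Proof. intros Hq. unfold qexp. rewrite <- pow_mult.
  assert (Hs : (0 <= sqrt q <= 1)%R) by (split; [apply sqrt_pos|rewrite <- sqrt_1; apply sqrt_le_1_alt; lra]).
  assert (H1 := pow_le1 (sqrt q) k Hs). assert (H2 := pow_le (sqrt q) k (proj1 Hs)).
  assert (H3 : (0 <= q ^ (k * k))%R) by (apply pow_le; lra). split; nra. Qed.

Lemma Bq_mono (a b : C) (q : R) : (Cmod a <= Cmod b)%R -> (q < 1)%R -> (Bq a q <= Bq b q)%R.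
Proof. intros H Hq. unfold Bq, Rdiv. apply Rmult_le_compat_r. apply Rlt_le, Rinv_0_lt_compat, exp_pos.
  apply exp_mono. apply Rmult_le_compat_r. apply Rlt_le, Rinv_0_lt_compat; lra. auto. Qed.

Lemma arith1 (X Y Z A dQ R0 : R) : (0 <= X <= A)%R -> (0 < dQ <= Y)%R -> (0 <= Z)%R -> (A * Z <= R0)%R -> (X / Y * Z <= R0 / dQ)%R.
Proof. intros HX HY HZ HR.
  assert (H1 : (0 < / Y <= / dQ)%R) by (split; [apply Rinv_0_lt_compat; lra|apply Rinv_le_contravar; lra]).
  assert (H2 : (X * Z <= R0)%R) by nra.
  unfold Rdiv. rewrite Rmult_assoc, (Rmult_comm (/ Y)), <- Rmult_assoc.
  apply (Rle_trans _ (R0 * / Y)). apply Rmult_le_compat_r; lra. apply Rmult_le_compat_l; nra. Qed.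

Lemma arith2 (X Y dP R0 : R) : (0 <= X <= R0)%R -> (0 < dP <= Y)%R -> (X / Y <= R0 / dP)%R.
Proof. intros HX HY.
  assert (H1 : (0 < / Y <= / dP)%R) by (split; [apply Rinv_0_lt_compat; lra|apply Rinv_le_contravar; lra]).
  unfold Rdiv. apply Rmult_le_compat; lra. Qed.

Lemma term_id (p q : R) (z t : C) n : (0 < q < 1)%R -> (0 <= p < 1)%R ->
  qpoch (RtoC p) q n / qpoch (RtoC q) q n *
      sum_n (fun k : nat => qbinom q n k * qexp q k / qpoch (RtoC p) q k * z ^ k) n * t ^ n
  = sum_n (fun k => (RtoC (qexp q k) / qpoch (RtoC q) q k * (z * t) ^ k) *
                    (Aq (RtoC p * RtoC (q ^ k)) q (n - k) * t ^ (n - k))) n.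
Proof. intros Hq Hp.
  assert (Hpn : forall j, qpoch (RtoC p) q j <> 0) by (intros; apply qpoch_nz; [lra|rewrite Cmod_q; lra]).
  assert (HQ : forall j, qpoch (RtoC q) q j <> 0) by (intros; apply Q_nz; auto).
  transitivity (sum_n (fun k => qpoch (RtoC p) q n / qpoch (RtoC q) q n * t ^ n * (qbinom q n k * qexp q k / qpoch (RtoC p) q k * z ^ k)) n).
  rewrite <- sumC_mult_l. ring.
  apply sumC_ext. intros k Hk. destruct (Nat.le_exists_sub k n Hk) as [m [Hm _]]. subst n.
  replace (m + k - k)%nat with m by lia. rewrite (Nat.add_comm m k).
  rewrite (qpoch_add (RtoC p)), Cpow_add_r, Cpow_mult_l. unfold qbinom, Aq.
  replace (k + m - k)%nat with m by lia.
  specialize (Hpn k). assert (H1 := HQ (k + m)%nat). assert (H2 := HQ k). assert (H3 := HQ m).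
  field. repeat split; auto. Qed.

Theorem lemma1 (q p : R) (z t : C) :
  (0 < q < 1)%R -> (0 <= p < 1)%R -> (Cmod t < 1)%R ->
  exists (Ppt Pt S : C),
    qpoch_inf_is (RtoC p * t) q Ppt /\
    qpoch_inf_is t q Pt /\ Pt <> 0 /\
    is_series (fun n : nat =>
      qexp q n / (qpoch (RtoC p * t) q n * qpoch (RtoC q) q n) * (z * t) ^ n) S /\
    is_series (fun n : nat =>
      qpoch (RtoC p) q n / qpoch (RtoC q) q n *
      sum_n (fun k : nat =>
        qbinom q n k * qexp q k / qpoch (RtoC p) q k * z ^ k) n * t ^ n)
      (Ppt / Pt * S).
Proof. intros Hq Hp Ht.
  assert (Hq' : (0 <= q < 1)%R) by lra.
  assert (Ht0 := Cmod_ge_0 t).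
  assert (Hpt : (Cmod (RtoC p * t) < 1)%R) by (rewrite Cmod_mult, Cmod_q by lra; nra).
  destruct (qpoch_cv (RtoC p * t) q Hq') as [Ppt HPpt].
  destruct (qpoch_cv t q Hq') as [Pt HPt].
  assert (HPt0 : Pt <> 0).
  { intros E. assert (H := limC_ge _ _ _ HPt (fun n => qpoch_low' t q n Hq' Ht)).
    rewrite E, Cmod_0 in H. assert (H2 := exp_pos (- (Cmod t / ((1 - Cmod t) * (1 - q))))). lra. }
  set (dQ := exp (- (q / ((1 - q) * (1 - q))))).
  assert (HdQ : forall k, (dQ <= Cmod (qpoch (RtoC q) q k))%R).
  { intros k. assert (H := qpoch_low' (RtoC q) q k Hq' ltac:(rewrite Cmod_q; lra)). rewrite Cmod_q in H by lra. exact H. }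
  assert (HdQ0 : (0 < dQ)%R) by apply exp_pos.
  set (dP := exp (- (Cmod (RtoC p * t) / ((1 - Cmod (RtoC p * t)) * (1 - q))))).
  assert (HdP : forall k, (dP <= Cmod (qpoch (RtoC p * t) q k))%R) by (intros; apply qpoch_low'; auto).
  assert (HdP0 : (0 < dP)%R) by apply exp_pos.
  assert (HQnz : forall j, qpoch (RtoC q) q j <> 0) by (intros; apply Q_nz; auto).
  assert (HPnz : forall j, qpoch (RtoC p * t) q j <> 0) by (intros; apply qpoch_nz; auto).
  set (u := fun k => RtoC (qexp q k) / qpoch (RtoC q) q k * (z * t) ^ k).
  destruct (geomdom (Cmod (z * t)) q Hq (Cmod_ge_0 _)) as [D [HD0 HD]].
  assert (Hu : forall k, (Cmod (u k) <= (D / dQ) * (1/2) ^ k)%R).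
  { intros k. unfold u. rewrite Cmod_mult, Cmod_div, Cmod_R, Cmod_pow by auto.
    destruct (qexp_bound q k Hq) as [E1 E2]. rewrite Rabs_pos_eq by auto.
    specialize (HD k). rewrite Rpow_mult_distr in HD. rewrite <- pow_mult in HD.
    unfold qexp in *. rewrite <- pow_mult in E2.
    assert (E3 : (0 <= Cmod (z * t) ^ k)%R) by (apply pow_le, Cmod_ge_0).
    specialize (HdQ k).
    replace (D / dQ * (1 / 2) ^ k)%R with (D * (1/2) ^ k / dQ)%R by (field; lra).
    apply (arith1 _ _ _ (q ^ (k * k))); [lra|lra|auto|rewrite Rmult_comm; auto]. }
  set (s := fun n : nat => qexp q n / (qpoch (RtoC p * t) q n * qpoch (RtoC q) q n) * (z * t) ^ n).
  assert (Hs : forall k, s k = u k / qpoch (RtoC p * t) q k).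
  { intros k. unfold s, u. field. split; auto. }
  assert (HSex : ex_series s).
  { apply (exC_le _ (fun k => (D / dQ / dP) * (1/2) ^ k)%R).
    - intros k. rewrite Hs, Cmod_div by auto. specialize (Hu k). specialize (HdP k).
      replace (D / dQ / dP * (1 / 2) ^ k)%R with (D / dQ * (1/2) ^ k / dP)%R by (field; lra).
      apply arith2; auto. split; auto. apply Cmod_ge_0.
    - eexists. apply isR_geom. lra. }
  destruct HSex as [S HS].
  exists Ppt, Pt, S. split; auto. split; auto. split; auto. split. exact HS.
  set (a := fun k : nat => RtoC p * RtoC (q ^ k)).
  assert (Ha : forall k, (Cmod (a k) <= Cmod (RtoC 1))%R).
  { intros k. unfold a. assert (H := pow_le1 q k ltac:(lra)). assert (0 <= q ^ k)%R by (apply pow_le; lra).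
    rewrite Cmod_mult, (Cmod_q p), (Cmod_q (q ^ k)), (Cmod_q 1); lra || nra. }
  set (B1 := Bq (RtoC 1) q).
  set (W := fun k => Ppt / qpoch (RtoC p * t) q k / Pt).
  assert (HW : forall k, is_series (fun m => Aq (a k) q m * t ^ m) (W k)).
  { intros k. apply qbin_thm; auto. unfold qpoch_inf_is.
    apply (limC_ext (fun m => qpoch (RtoC p * t) q (m + k) * / qpoch (RtoC p * t) q k)).
    - intros m. rewrite Nat.add_comm, qpoch_add. unfold a. replace (RtoC p * t * RtoC (q ^ k)) with (RtoC p * RtoC (q ^ k) * t) by ring.
      field. auto.
    - apply limC_mult. apply limC_shift'. exact HPpt. apply limC_const. }
  assert (HAb : forall k m, (Cmod (Aq (a k) q m * t ^ m) <= B1 * Cmod t ^ m)%R).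
  { intros k m. rewrite Cmod_mult, Cmod_pow. apply Rmult_le_compat_r. apply pow_le; auto.
    eapply Rle_trans. apply Aq_bound; auto. apply Bq_mono; auto. lra. }
  assert (Hgeo : is_series (fun m => B1 * Cmod t ^ m)%R (B1 / (1 - Cmod t))%R) by (apply isR_geom; lra).
  set (f := fun N k => u k * sum_n (fun m => Aq (a k) q m * t ^ m) (N - k)).
  set (g := fun k => u k * W k).
  set (M := fun k => (Cmod (u k) * (B1 / (1 - Cmod t)))%R).
  assert (HB1 : (0 < B1)%R) by apply Bq_pos.
  assert (Hlim := tannery f g M (Ppt / Pt * S)).
  assert (Hmain : filterlim (fun N => sum_n (f N) N) eventually (locally (Ppt / Pt * S))).
  { apply Hlim.
    - intros N k. unfold f, M. rewrite Cmod_mult. apply Rmult_le_compat_l. apply Cmod_ge_0.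
      eapply Rle_trans. apply norm_sum_n. eapply Rle_trans. apply sum_n_le. apply HAb.
      apply psum_le; auto. intros; apply Rmult_le_pos; [lra|apply pow_le; auto].
    - intros k. unfold g, M. rewrite Cmod_mult. apply Rmult_le_compat_l. apply Cmod_ge_0.
      eapply series_norm_le. apply HW. apply HAb. exact Hgeo.
    - apply (@ex_series_le R_AbsRing R_CompleteNormedModule _ (fun k => (D / dQ * (B1 / (1 - Cmod t))) * (1/2) ^ k)%R).
      + intros k. unfold M. change (norm (Cmod (u k) * (B1 / (1 - Cmod t)))%R) with (Rabs (Cmod (u k) * (B1 / (1 - Cmod t)))%R).
        assert (HBt : (0 < B1 / (1 - Cmod t))%R) by (apply Rdiv_lt_0_compat; lra).
        rewrite Rabs_pos_eq by (apply Rmult_le_pos; [apply Cmod_ge_0|lra]).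
        replace (D / dQ * (B1 / (1 - Cmod t)) * (1 / 2) ^ k)%R with (D / dQ * (1 / 2) ^ k * (B1 / (1 - Cmod t)))%R by ring.
        apply Rmult_le_compat_r; [lra|apply Hu].
      + eexists. apply isR_geom. lra.
    - intros k. unfold f, g. apply limC_mult. apply limC_const. apply limC_sub. apply (HW k).
    - apply (isC_ext (fun k => Ppt / Pt * s k)).
      + intros k. unfold g, W. rewrite Hs. field. split; auto.
      + apply isC_scal. exact HS. }
  unfold is_series. eapply limC_ext; [|exact Hmain].
  intros N. unfold f. simpl.
  rewrite (sumC_ext _ _ _ (fun k _ => sumC_mult_l (u k) (fun m => Aq (a k) q m * t ^ m) (N - k))).
  rewrite <- (tri (fun k m => u k * (Aq (a k) q m * t ^ m))).
  apply sumC_ext. intros n _. rewrite term_id; auto. Qed.
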